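(* Let $k\ge 0$ be an integer and let $G$ be a finite simple graph on $n\ge 1$ vertices with average degree $d(G)$. Then $\alpha_k(G) > \frac{k+1}{d(G)+2k+2}\, n$.
   Context: For a graph $G=(V,E)$ and an integer $k\ge 0$, a $k$-independent set is a set $S\subseteq V$ such that the induced subgraph $G[S]$ has maximum degree at most $k$; $\alpha_k(G)$ denotes the maximum cardinality of a $k$-independent set of $G$. The average degree is $d(G)=\frac{1}{n}\sum_{v\in V}\deg(v)=\frac{2|E|}{n}$. *)

(* Defs.v *)
From HB Require Import structures.
From mathcomp Require Import all_boot all_order all_algebra.
Set Implicit Arguments. Unset Strict Implicit. Unset Printing Implicit Defensive.

Definition simple_graph (T : finType) (e : rel T) : Prop :=
  symmetric e /\ irreflexive e.

Definition deg (T : finType) (e : rel T) (v : T) : nat := #|[set w | e v w]|.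

Definition k_independent (T : finType) (e : rel T) (k : nat) (S : {set T}) : bool :=
  [forall v in S, #|[set w in S | e v w]| <= k].

Definition alpha_k (T : finType) (e : rel T) (k : nat) : nat :=
  \max_(S : {set T} | k_independent e k S) #|S|.

Definition avg_deg (T : finType) (e : rel T) : rat :=
  ((\sum_(v : T) deg e v)%:R / #|T|%:R)%R.

(* Main.v *)
Require Import Defs.
From mathcomp Require Import all_boot all_order all_algebra.
From mathcomp Require Import zify ring lra.
Import Order.TTheory GRing.Theory Num.Theory.

Section Aux.
Variables (T : finType) (e : rel T).
Hypothesis (sym : symmetric e) (irr : irreflexive e).

Definition dg (A : {set T}) (v : T) : nat := \sum_(w in A) (e v w : nat).
Definition Qs (A : {set T}) : nat := \sum_(v in A) dg A v.

Lemma card_dg (A : {set T}) v : #|[set w in A | e v w]| = dg A v.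
Proof.
rewrite -sum1_card /dg big_mkcond [RHS]big_mkcond /=.
by apply: eq_bigr => w _; rewrite inE; case: (w \in A); case: (e v w).
Qed.

Lemma dgU1 (A : {set T}) x v : x \notin A -> dg (x |: A) v = e v x + dg A v.
Proof. by move=> xA; rewrite /dg big_setU1. Qed.

Lemma QU1 (A : {set T}) x : x \notin A -> Qs (x |: A) = Qs A + 2 * dg A x.
Proof.
move=> xA; rewrite /Qs big_setU1 //= dgU1 // irr add0n.
under eq_bigr => v _ do rewrite dgU1 //.
rewrite big_split /=.
have -> : \sum_(i in A) (e i x : nat) = dg A x.
  by apply: eq_bigr => v _; rewrite sym.
lia.
Qed.

Lemma dg_le (A B : {set T}) v : A \subset B -> dg A v <= dg B v.
Proof.
move=> sAB; rewrite /dg [X in _ <= X](bigID (mem A)) /=.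
have -> : \sum_(i in B | i \in A) (e v i : nat) = \sum_(i in A) (e v i : nat).
  by apply: eq_bigl => i; rewrite andbC; case iA: (i \in A) => //=; rewrite (subsetP sAB).
by apply: leq_addr.
Qed.

Lemma dg_card (A : {set T}) v : dg A v <= #|A|.
Proof.
rewrite -card_dg; apply: subset_leq_card; apply/subsetP=> w; rewrite inE => /andP[] //.
Qed.

Variable k : nat.

Lemma local_opt (U : {set T}) :
  (forall v, v \in U -> #|U| * dg U v < Qs U + k.+1 * #|U|) -> 0 < #|U| ->
  exists S : {set T}, [/\ S \subset U, k_independent e k S &
     k.+1 * #|U| ^ 2 < #|S| * (Qs U + 2 * k.+1 * #|U|)].
Proof.
move=> hdeg U0.
pose Phi (S : {set T}) := Qs S + (2 * k + 1) * #|U :\: S|.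
case: (@arg_minnP _ U (fun S : {set T} => S \subset U) Phi (subxx _)) => S sSU Smin.
have kind : forall v, v \in S -> dg S v <= k.
  move=> v vS.
  have := Smin (S :\ v) (subset_trans (subsetDl _ _) sSU).
  have eS : S = v |: (S :\ v) by rewrite setD1K.
  have vS' : v \notin S :\ v by rewrite setD11.
  have eU : U :\: (S :\ v) = v |: (U :\: S).
    apply/setP => x; rewrite !inE; case: (eqVneq x v) => [->|] /=; last by [].
    exact: (subsetP sSU v vS).
  have vUS : v \notin U :\: S by rewrite inE vS.
  rewrite /Phi eU cardsU1 vUS {1}eS QU1 //.
  have -> : dg S v = dg (S :\ v) v by rewrite {1}eS dgU1 // irr.
  lia.
have outs : forall u, u \in U :\: S -> k < dg S u.
  move=> u uUS.
  have uS : u \notin S by move: uUS; rewrite inE => /andP[].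
  have uU : u \in U by move: uUS; rewrite inE => /andP[].
  have sub' : u |: S \subset U by rewrite subUset sub1set uU sSU.
  have := Smin _ sub'.
  have eU : #|U :\: S| = (#|U :\: (u |: S)|).+1.
    rewrite (cardsD1 u) uUS add1n; congr _.+1; apply: eq_card => x.
    by rewrite !inE; case: (eqVneq x u).
  rewrite /Phi QU1 // eU; lia.
have cnt : k.+1 * #|U :\: S| <= \sum_(v in S) dg U v.
  apply: (@leq_trans (\sum_(u in U :\: S) dg S u)).
    by rewrite mulnC -sum_nat_const; apply: leq_sum => u /outs.
  rewrite /dg exchange_big /=.
  apply: leq_sum => v vS.
  apply: (@leq_trans (\sum_(i in U :\: S) (e v i : nat))).
    by rewrite leq_eqVlt; apply/orP; left; apply/eqP; apply: eq_bigr => i _; rewrite sym.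
  exact: dg_le (subsetDl U S).
have [v vS] : exists v, v \in S.
  apply/set0Pn/negP => /eqP S0.
  case/card_gt0P: U0 => u uU.
  have := outs u; rewrite S0 inE uU /= inE => /(_ isT).
  by rewrite /dg big_set0.
have strict : #|U| * \sum_(v in S) dg U v < #|S| * (Qs U + k.+1 * #|U|).
  rewrite big_distrr /= -sum_nat_const (bigD1 v) //= [X in _ < X](bigD1 v) //=.
  rewrite -addSn; apply: leq_add; first by apply: hdeg; apply: (subsetP sSU).
  apply: leq_sum => w /andP[wS _]; apply: ltnW; apply: hdeg; exact: (subsetP sSU).
have cU : #|S| + #|U :\: S| = #|U|.
  by rewrite -(cardsID S U) (setIidPr sSU).
exists S; split => //.
  by apply/forall_inP => x xS; rewrite card_dg kind.
have := leq_mul (leqnn #|U|) cnt.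
move: strict; rewrite -cU; set s := #|S|; set r := #|U :\: S|; set X := \sum_(i in S) dg U i.
set Q := Qs U. nia.
Qed.

Lemma key (U : {set T}) : 0 < #|U| ->
  exists S : {set T}, [/\ S \subset U, k_independent e k S &
     k.+1 * #|U| ^ 2 < #|S| * (Qs U + 2 * k.+1 * #|U|)].
Proof.
have [N] := ubnP #|U|; elim: N U => // N IH U ltUN U0.
case: (boolP [exists v in U, Qs U + k.+1 * #|U| <= #|U| * dg U v]); last first.
  move=> /exists_inPn hdeg; apply: local_opt => // v /hdeg; rewrite ltnNge.
  by [].
case/exists_inP => v vU hv.
set U' := U :\ v.
have vU' : v \notin U' by rewrite setD11.
have eU : U = v |: U' by rewrite setD1K.
have hdv : dg U v = dg U' v by rewrite {1}eU dgU1 // irr.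
have hQ : Qs U = Qs U' + 2 * dg U' v by rewrite {1}eU QU1.
have cU : #|U| = #|U'|.+1 by rewrite (cardsD1 v) vU.
have dpos : 0 < dg U' v.
  rewrite -hdv; move: hv U0; set n := #|U|; set d := dg U v; nia.
have U'0 : 0 < #|U'| by apply: leq_trans dpos (dg_card _ _).
have ltN : #|U'| < N by rewrite -ltnS -cU.
have [S [sSU' kS hS]] := IH U' ltN U'0.
exists S; split => //.
  by apply: subset_trans sSU' (subsetDl _ _).
move: hv hS; rewrite hQ hdv cU.
set n := #|U'|; set d := dg U' v; set Q := Qs U'; set s := #|S|.
move=> hv hS.
have h1 : n.+1 ^ 2 * (Q + 2 * k.+1 * n) <= n ^ 2 * (Q + 2 * d + 2 * k.+1 * n.+1).
  nia.
have h2 : k.+1 * n ^ 2 * n.+1 ^ 2 < s * (Q + 2 * k.+1 * n) * n.+1 ^ 2.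
  by rewrite ltn_pmul2r ?expn_gt0.
rewrite ltnNge; apply/negP => hc.
have h4 : s * (Q + 2 * k.+1 * n) * n.+1 ^ 2 <= s * (Q + 2 * d + 2 * k.+1 * n.+1) * n ^ 2.
  have := leq_mul (leqnn s) h1; rewrite !mulnA; lia.
have h5 := leq_mul hc (leqnn (n ^ 2)).
lia.
Qed.

End Aux.

Local Open Scope ring_scope.

Theorem mainTheorem2 (T : finType) (e : rel T) (k : nat) :
  simple_graph e -> (0 < #|T|)%N ->
  (k.+1)%:R / (avg_deg e + 2 * k%:R + 2) * #|T|%:R < (alpha_k e k)%:R :> rat.
Proof.
move=> [sym irr] n0.
have T0 : (0 < #|[set: T]|)%N by rewrite cardsT.
have [S [_ kS hS]] := @key T e sym irr k _ T0.
move: hS; rewrite cardsT.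
have hD : @Qs T e [set: T] = (\sum_(v : T) deg e v)%N.
  rewrite /Qs; apply: eq_big => [v|v _]; first by rewrite in_setT.
  rewrite -(@card_dg T e) /deg; apply: eq_card => w; by rewrite !inE.
rewrite hD /avg_deg.
set D := (\sum_(v : T) deg e v)%N; set n := #|T|; set s := #|S| => hS.
have sa : (s <= alpha_k e k)%N by exact: (@leq_bigmax_cond _ (fun S : {set T} => k_independent e k S) (fun S : {set T} => #|S|) S kS).
have nR : (n%:R : rat) != 0 by rewrite pnatr_eq0 -lt0n.
have XR : ((D + 2 * k.+1 * n)%N%:R : rat) != 0.
  by rewrite pnatr_eq0 -lt0n addn_gt0 !muln_gt0 n0 orbT.
have -> : D%:R / n%:R + 2 * k%:R + 2 = (D + 2 * k.+1 * n)%N%:R / n%:R :> rat.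
  rewrite -[k.+1]addn1 !natrD !natrM; field; exact: nR.
have -> : k.+1%:R / ((D + 2 * k.+1 * n)%N%:R / n%:R) * n%:R
          = (k.+1 * n ^ 2)%N%:R / (D + 2 * k.+1 * n)%N%:R :> rat.
  rewrite natrM natrX; field; rewrite nR andbT.
  have hpos : (0:rat) < n%:R by rewrite ltr0n.
  have hD0 : (0:rat) <= D%:R by apply: ler0n.
  have hk : (0:rat) <= k%:R by apply: ler0n.
  rewrite gt_eqF //; nra.
rewrite ltr_pdivrMr; last by rewrite ltr0n addn_gt0 !muln_gt0 n0 orbT.
rewrite -natrM ltr_nat.
apply: (leq_trans hS); by rewrite leq_mul2r sa orbT.
Qed.
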